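(* Let $(X_j,d_j,\tau_j)$, $j\in\mathbb N$, be a sequence of compact timed-metric-spaces such that: (i) (equibounded) there is $D>0$ with $\operatorname{diam}_{d_j}(X_j)\le D$ for all $j$; (ii) (equicompact) for every $R\in(0,D]$ there is $N(R)\in\mathbb N$ such that for every $j$ there are points $x^j_{R,1},\dots,x^j_{R,N(R)}\in X_j$ with $X_j\subset\bigcup_{i=1}^{N(R)}B_{d_j}(x^j_{R,i},R)$; (iii) there is $\tau_{max}>0$ with $\tau_j(X_j)\subset[0,\tau_{max}]$ for all $j$. Then a subsequence (still denoted $(X_j,d_j,\tau_j)$) converges in the intrinsic timed Hausdorff sense to a compact timed-metric-space $(\bar X_\infty,d_\infty,\tau_\infty)$, i.e. $d^\kappa_{\tau-H}\big((X_j,d_j,\tau_j),(\bar X_\infty,d_\infty,\tau_\infty)\big)\to0$. In fact, there exist a compact set $Z\subset\ell^\infty$ and timed-Fréchet maps (which are distance and time preserving) $$\varphi_j:X_j\to[0,\tau_{max}]\times Z\subset\ell^\infty\ (j\in\mathbb N),\qquad \varphi_\infty:\bar X_\infty\to[0,\tau_{max}]\times Z\subset\ell^\infty,$$ such that $$d_H^{[0,\tau_{max}]\times Z}\big(\varphi_j(X_j),\varphi_\infty(\bar X_\infty)\big)\to0 .$$ In addition there exist an uncountable index set $\mathcal A$ (of ''addresses'') and surjective maps $\mathcal I^j:\mathcal A\to X_j$ ($j\in\mathbb N$) and $\mathcal I^\infty:\mathcal A\to\bar X_\infty$ such that, as $j\to\infty$, $$\sup_{\alpha\in\mathcal A}\big\|\varphi_j(\mathcal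 I^j(\alpha))-\varphi_\infty(\mathcal I^\infty(\alpha))\big\|_{\infty}\to0 .$$ In particular $$\sup_{\alpha\in\mathcal A}\big|\tau_j(\mathcal I^j(\alpha))-\tau_\infty(\mathcal I^\infty(\alpha))\big|\to0 \quad\text{and}\quad \sup_{\alpha,\alpha'\in\mathcal A}\big|d_j(\mathcal I^j(\alpha),\mathcal I^j(\alpha'))-d_\infty(\mathcal I^\infty(\alpha),\mathcal I^\infty(\alpha'))\big|\to0 .$$
   Context: $\ell^\infty$ is the Banach space of bounded real sequences $(s_0,s_1,s_2,\dots)$ with $d_{\ell^\infty}(s,r)=\|s-r\|_\infty=\sup_i|s_i-r_i|$. For subsets $U,W$ of a metric space $(Z',d_{Z'})$, the Hausdorff distance is $d_H^{Z'}(U,W)=\inf\{r>0:\forall u\in U\,\exists w\in W,\ d_{Z'}(u,w)<r,\ \text{and}\ \forall w\in W\,\exists u\in U,\ d_{Z'}(u,w)<r\}$. A timed-metric-space $(X,d,\tau)$ is a metric space $(X,d)$ together with a function $\tau:X\to[0,\infty)$ that is Lipschitz with constant $1$. Given a compact timed-metric-space $(X,d,\tau)$ with $\tau(X)\subset[0,\tau_{max}]$ and a countable dense sequence of points $\mathcal N=\{x_1,x_2,x_3,\dots\}\subset X$, the timed-Fréchet map is $\kappa_{\tau,X,\mathcal N}:X\to[0,\tau_{max}]\times\ell^\infty\subset\ell^\infty$, $\kappa_{\tau,X,\mathcal N}(x)=(\tau(x),d(x_1,x),d(x_2,x),d(x_3,x),\dots)$; here $[0,\tau_{max}]\times Z$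 for $Z\subset\ell^\infty$ denotes the set of sequences $(w_0,z_1,z_2,\dots)$ with $w_0\in[0,\tau_{max}]$ and $(z_1,z_2,\dots)\in Z$. Such maps are distance preserving ($\|\kappa_{\tau,X,\mathcal N}(x)-\kappa_{\tau,X,\mathcal N}(y)\|_\infty=d(x,y)$) and time preserving (the $0$-th coordinate of $\kappa_{\tau,X,\mathcal N}(x)$ is $\tau(x)$). The intrinsic timed Hausdorff distance between compact timed-metric-spaces is $d^\kappa_{\tau-H}\big((X_1,d_1,\tau_1),(X_2,d_2,\tau_2)\big)=\inf d_H^{\ell^\infty}\big(\kappa_{\tau_1,X_1,\mathcal N_1}(X_1),\kappa_{\tau_2,X_2,\mathcal N_2}(X_2)\big)$, the infimum over all countable dense sequences $\mathcal N_i$ in $X_i$ (all choices and orderings); convergence in the intrinsic timed Hausdorff sense means this distance tends to $0$. *)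

(* Defs.v *)
From Stdlib Require Import Reals List.
Open Scope R_scope.

Definition is_metric {X : Type} (d : X -> X -> R) : Prop :=
  (forall x y, 0 <= d x y) /\
  (forall x y, d x y = 0 <-> x = y) /\
  (forall x y, d x y = d y x) /\
  (forall x y z, d x z <= d x y + d y z).

(* open sets and (open-cover) compactness w.r.t. a family of open balls;
   [ball x r y] means "y lies in the open ball of radius r around x". *)
Definition ball_open {T : Type} (ball : T -> R -> T -> Prop) (U : T -> Prop) : Prop :=
  forall x, U x -> exists r, 0 < r /\ forall y, ball x r y -> U y.

Definition ball_compact {T : Type} (ball : T -> R -> T -> Prop) (K : T -> Prop) : Prop :=
  forall (I : Type) (U : I -> T -> Prop),
    (forall i, ball_open ball (U i)) ->
    (forall x, K x -> exists i, U i x) ->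
    exists l : list I, forall x, K x -> exists i, In i l /\ U i x.

Definition metric_ball {X : Type} (d : X -> X -> R) (x : X) (r : R) (y : X) : Prop :=
  d x y < r.

Definition compact_timed_metric_space {X : Type} (d : X -> X -> R) (tau : X -> R) : Prop :=
  is_metric d /\
  ball_compact (metric_ball d) (fun _ => True) /\
  (forall x, 0 <= tau x) /\
  (forall x y, Rabs (tau x - tau y) <= d x y).

Definition seqR := nat -> R.

Definition linf_bounded (s : seqR) : Prop := exists M, forall i, Rabs (s i) <= M.

Definition linf_lt (s t : seqR) (r : R) : Prop :=
  exists delta, delta < r /\ forall i, Rabs (s i - t i) <= delta.

Definition linf_le (s t : seqR) (r : R) : Prop :=
  forall i, Rabs (s i - t i) <= r.

Definition linf_compact (Z : seqR -> Prop) : Prop :=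
  (forall z, Z z -> linf_bounded z) /\ ball_compact (fun s r t => linf_lt s t r) Z.

Definition hausdorff_lt (A B : seqR -> Prop) (eps : R) : Prop :=
  exists r, 0 < r /\ r < eps /\
    (forall u, A u -> exists w, B w /\ linf_lt u w r) /\
    (forall w, B w -> exists u, A u /\ linf_lt u w r).

(* [0,tmax] x Z : sequences (w_0, z_1, z_2, ...) with w_0 in [0,tmax] and
   (z_1, z_2, ...) in Z (Z is stored with z_1 at index 0) *)
Definition time_slab (tmax : R) (Z : seqR -> Prop) (w : seqR) : Prop :=
  0 <= w 0%nat <= tmax /\ Z (fun k => w (S k)).

Definition image {X : Type} (f : X -> seqR) : seqR -> Prop :=
  fun w => exists x, f x = w.

(* countable dense sequence N = {x_1, x_2, ...} (x_{k+1} = N k) *)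
Definition dense_seq {X : Type} (d : X -> X -> R) (N : nat -> X) : Prop :=
  forall x eps, 0 < eps -> exists k, d (N k) x < eps.

Definition kappa {X : Type} (tau : X -> R) (d : X -> X -> R) (N : nat -> X) (x : X) : seqR :=
  fun i => match i with O => tau x | S k => d (N k) x end.

(* intrinsic timed Hausdorff distance  d^kappa_{tau-H}(X1, X2) < eps
   (infimum over all countable dense sequences N1, N2) *)
Definition intrinsic_tH_lt {X1 X2 : Type}
  (d1 : X1 -> X1 -> R) (tau1 : X1 -> R) (d2 : X2 -> X2 -> R) (tau2 : X2 -> R)
  (eps : R) : Prop :=
  exists (N1 : nat -> X1) (N2 : nat -> X2),
    dense_seq d1 N1 /\ dense_seq d2 N2 /\
    hausdorff_lt (image (kappa tau1 d1 N1)) (image (kappa tau2 d2 N2)) eps.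

Definition countable_type (A : Type) : Prop :=
  exists f : A -> nat, forall a b, f a = f b -> a = b.

Definition uncountable_type (A : Type) : Prop := ~ countable_type A.

Definition surj {A B : Type} (f : A -> B) : Prop := forall b, exists a, f a = b.

(* Main.v *)
Require Import Defs.
From Stdlib Require Import Reals Lra Lia List Classical ClassicalEpsilon FunctionalExtensionality ProofIrrelevance Eqdep_dec.
From Stdlib Require Cantor.
Open Scope R_scope.


Lemma linf_le_sym s t r : linf_le s t r -> linf_le t s r.
Proof. intros H i. rewrite Rabs_minus_sym. apply H. Qed.

Lemma linf_le_tri s t u a b : linf_le s t a -> linf_le t u b -> linf_le s u (a + b).
Proof.
  intros H1 H2 i. specialize (H1 i); specialize (H2 i).
  replace (s i - u i) with ((s i - t i) + (t i - u i)) by ring.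
  eapply Rle_trans; [apply Rabs_triang|lra].
Qed.

Lemma linf_le_mono s t a b : linf_le s t a -> a <= b -> linf_le s t b.
Proof. intros H Hab i. specialize (H i). lra. Qed.

Lemma linf_le_refl s a : 0 <= a -> linf_le s s a.
Proof. intros H i. rewrite Rminus_diag, Rabs_R0. exact H. Qed.

Lemma linf_le_lt s t a b : linf_le s t a -> a < b -> linf_lt s t b.
Proof. intros H Hab. exists a. split; auto. Qed.

Definition closure (U : seqR -> Prop) (z : seqR) : Prop :=
  forall eps, 0 < eps -> exists u, U u /\ linf_le z u eps.

Definition totbdd (U : seqR -> Prop) : Prop :=
  forall eps, 0 < eps -> exists l : list seqR,
    forall u, U u -> exists c, In c l /\ linf_le u c eps.

Definition complete_set (K : seqR -> Prop) : Prop :=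
  forall (x : nat -> seqR) (a : nat -> R), (forall n, K (x n)) ->
    (forall n m, (n <= m)%nat -> linf_le (x n) (x m) (a n)) ->
    (forall eps, 0 < eps -> exists n, a n < eps) ->
    exists z, K z /\ forall n, linf_le (x n) z (a n).

Lemma closure_incl U u : U u -> closure U u.
Proof. intros H eps Heps. exists u. split; auto. apply linf_le_refl; lra. Qed.

Lemma closure_totbdd U : totbdd U -> totbdd (closure U).
Proof.
  intros H eps Heps.
  destruct (H (eps/2)) as [l Hl]; [lra|].
  exists l. intros u Hu.
  destruct (Hu (eps/2)) as [v [Hv Huv]]; [lra|].
  destruct (Hl v Hv) as [c [Hc Hvc]].
  exists c; split; auto.
  replace eps with (eps/2 + eps/2) by field.
  eapply linf_le_tri; eauto.
Qed.

Lemma cv_le_const (u : nat -> R) l c a n :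
  Un_cv u l -> (forall m, (n <= m)%nat -> Rabs (c - u m) <= a) -> Rabs (c - l) <= a.
Proof.
  intros Hu H.
  apply Rnot_lt_le; intro Hlt.
  destruct (Hu (Rabs (c - l) - a)) as [N HN]; [lra|].
  specialize (HN (max n N) ltac:(lia)).
  specialize (H (max n N) ltac:(lia)).
  unfold R_dist in HN.
  assert (Rabs (c - l) <= Rabs (c - u (max n N)) + Rabs (u (max n N) - l)).
  { replace (c - l) with ((c - u (max n N)) + (u (max n N) - l)) by ring. apply Rabs_triang. }
  lra.
Qed.

Lemma closure_complete U : complete_set (closure U).
Proof.
  intros x a Hx Hcau Ha.
  assert (Hc : forall i, {l | Un_cv (fun n => x n i) l}).
  { intro i. apply R_complete. intros eps Heps.
    destruct (Ha (eps/2)) as [N HN]; [lra|].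
    exists N. intros n m Hn Hm. unfold R_dist.
    pose proof (Hcau N n Hn i). pose proof (Hcau N m Hm i).
    replace (x n i - x m i) with (-(x N i - x n i) + (x N i - x m i)) by ring.
    eapply Rle_lt_trans; [apply Rabs_triang|]. rewrite Rabs_Ropp. lra. }
  set (z := fun i => proj1_sig (Hc i)).
  assert (Hz : forall n, linf_le (x n) z (a n)).
  { intros n i. unfold z. destruct (Hc i) as [l Hl]; simpl.
    apply (cv_le_const (fun n => x n i) l (x n i) (a n) n Hl).
    intros m Hm. apply Hcau; auto. }
  exists z. split; auto.
  intros eps Heps.
  destruct (Ha (eps/2)) as [n Hn]; [lra|].
  destruct (Hx n (eps/2)) as [u [Hu Hxu]]; [lra|].
  exists u. split; auto.
  replace eps with (eps/2 + eps/2) by field.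
  eapply linf_le_tri; [apply (linf_le_mono z (x n) (a n) (eps/2)); [apply linf_le_sym; apply Hz|lra]|].
  exact Hxu.
Qed.

Definition covered {I : Type} (U : I -> seqR -> Prop) (S : seqR -> Prop) :=
  exists l : list I, forall x, S x -> exists i, In i l /\ U i x.

Lemma covered_union {I : Type} (U : I -> seqR -> Prop) (S : seqR -> Prop) (lc : list seqR) eps :
  (forall c, In c lc -> covered U (fun x => S x /\ linf_le x c eps)) ->
  covered U (fun x => S x /\ exists c, In c lc /\ linf_le x c eps).
Proof.
  induction lc as [|c0 lc IH]; intros H.
  - exists nil. intros x [_ [c [Hc _]]]. destruct Hc.
  - destruct (H c0 (or_introl eq_refl)) as [l0 Hl0].
    destruct IH as [l1 Hl1]. { intros c Hc. apply H. right; auto. }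
    exists (l0 ++ l1). intros x [Sx [c [[Hc|Hc] Hxc]]].
    + subst c. destruct (Hl0 x (conj Sx Hxc)) as [i [Hi Ui]].
      exists i; split; auto. apply in_or_app; left; auto.
    + destruct (Hl1 x (conj Sx (ex_intro _ c (conj Hc Hxc)))) as [i [Hi Ui]].
      exists i; split; auto. apply in_or_app; right; auto.
Qed.

Definition e_n (n : nat) : R := / (INR n + 1).
Lemma e_pos n : 0 < e_n n.
Proof. unfold e_n. apply Rinv_0_lt_compat. pose proof (pos_INR n). lra. Qed.
Lemma e_dec n m : (n <= m)%nat -> e_n m <= e_n n.
Proof. intros H. unfold e_n. apply Rinv_le_contravar.
  pose proof (pos_INR n); lra. apply le_INR in H. lra. Qed.
Lemma e_small eps : 0 < eps -> exists n, e_n n < eps.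
Proof.
  intros H. destruct (archimed_cor1 eps H) as [N [HN HN0]].
  exists N. eapply Rle_lt_trans; [|apply HN]. unfold e_n.
  apply Rinv_le_contravar. apply lt_0_INR; auto. lra.
Qed.

Fixpoint St (K : seqR -> Prop) (cf : (seqR -> Prop) -> nat -> seqR) (n : nat) : seqR -> Prop :=
  match n with
  | O => K
  | S n' => fun x => St K cf n' x /\ linf_le x (cf (St K cf n') n) (e_n n)
  end.

Lemma St_K K cf n x : St K cf n x -> K x.
Proof. revert x; induction n; simpl; intros x H; auto. apply IHn; apply H. Qed.

Lemma St_mono K cf n m x : (n <= m)%nat -> St K cf m x -> St K cf n x.
Proof.
  intros H; induction H; auto. intros Hx. apply IHle. apply Hx.
Qed.

Lemma compact_of K : totbdd K -> complete_set K -> ball_compact (fun s r t => linf_lt s t r) K.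
Proof.
  intros Htb Hcomp I U Hopen Hcov.
  apply NNPP; intro Hbad. change (~ covered U K) in Hbad.
  assert (Hsplit : forall S, (forall x, S x -> K x) -> ~ covered U S -> forall n,
             exists c, ~ covered U (fun x => S x /\ linf_le x c (e_n n))).
  { intros S HSK HS n. apply NNPP; intro Hno.
    destruct (Htb (e_n n) (e_pos n)) as [lc Hlc].
    apply HS.
    destruct (covered_union U S lc (e_n n)) as [l Hl].
    { intros c _. apply NNPP. intro Hc. apply Hno. exists c. exact Hc. }
    exists l. intros x Sx. apply Hl. split; auto. }
  pose (inh := inhabits (fun _ : nat => 0) : inhabited seqR).
  pose (cf := fun (S : seqR -> Prop) n => epsilon inh (fun c => ~ covered U (fun x => S x /\ linf_le x c (e_n n)))).
  assert (Hbadn : forall n, ~ covered U (St K cf n)).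
  { induction n; simpl; auto.
    apply (epsilon_spec inh (fun c => ~ covered U (fun x => St K cf n x /\ linf_le x c (e_n (S n))))).
    apply Hsplit; auto. apply St_K. }
  assert (Hne : forall n, exists x, St K cf n x).
  { intros n. apply NNPP; intro H. apply (Hbadn n). exists nil. intros x Hx. exfalso; apply H; exists x; auto. }
  pose (pt := fun n => epsilon inh (St K cf n)).
  assert (Hpt : forall n, St K cf n (pt n)).
  { intros n. apply epsilon_spec. apply Hne. }
  assert (Hball : forall n m, (n <= m)%nat ->
     linf_le (pt (S m)) (cf (St K cf n) (S n)) (e_n (S n))).
  { intros n m Hnm. apply (St_mono K cf (S n) (S m)); [lia|apply Hpt]. }
  assert (Hcau : forall n m, (n <= m)%nat -> linf_le (pt (S n)) (pt (S m)) (2 * e_n (S n))).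
  { intros n m Hnm. replace (2 * e_n (S n)) with (e_n (S n) + e_n (S n)) by ring.
    eapply linf_le_tri; [apply Hball; lia|]. apply linf_le_sym, Hball; auto. }
  destruct (Hcomp (fun n => pt (S n)) (fun n => 2 * e_n (S n))) as [z [Kz Hz]].
  { intros n. apply (St_K K cf (S n)). apply Hpt. }
  { exact Hcau. }
  { intros eps Heps. destruct (e_small (eps/2)) as [n Hn]; [lra|]. exists n.
    pose proof (e_dec n (S n) ltac:(lia)). lra. }
  destruct (Hcov z Kz) as [i Ui].
  destruct (Hopen i z Ui) as [r [Hr Hri]].
  destruct (e_small (r/4)) as [n Hn]; [lra|].
  apply (Hbadn (S n)). exists (i :: nil). intros y Hy. exists i. split; [left; auto|].
  apply Hri. apply linf_le_lt with (4 * e_n (S n)).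
  - replace (4 * e_n (S n)) with (2 * e_n (S n) + (e_n (S n) + e_n (S n))) by ring.
    eapply linf_le_tri; [apply linf_le_sym, Hz|].
    eapply linf_le_tri; [apply Hball; auto|].
    apply linf_le_sym. apply Hy.
  - pose proof (e_dec n (S n) ltac:(lia)). lra.
Qed.


Definition supset (B : R) (s : seqR) : R -> Prop := fun r => exists i, r = Rmin (Rabs (s i)) B.
Lemma supset_bound B s : bound (supset B s).
Proof. exists B. intros r [i ->]. apply Rmin_r. Qed.
Lemma supset_ne B s : exists r, supset B s r.
Proof. exists (Rmin (Rabs (s 0%nat)) B). exists 0%nat. auto. Qed.
Definition supn (B : R) (s : seqR) : R :=
  proj1_sig (completeness (supset B s) (supset_bound B s) (supset_ne B s)).

Lemma supn_ge B s i : Rabs (s i) <= B -> Rabs (s i) <= supn B s.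
Proof.
  intros H. unfold supn. destruct completeness as [m [Hub Hlub]]; simpl.
  apply Hub. exists i. rewrite Rmin_left; auto.
Qed.
Lemma supn_le B s c : (forall i, Rabs (s i) <= c) -> supn B s <= c.
Proof.
  intros H. unfold supn. destruct completeness as [m [Hub Hlub]]; simpl.
  apply Hlub. intros r [i ->]. eapply Rle_trans; [apply Rmin_l|apply H].
Qed.
Lemma supn_nonneg B s : 0 <= B -> 0 <= supn B s.
Proof.
  intros HB. unfold supn. destruct completeness as [m [Hub Hlub]]; simpl.
  eapply Rle_trans; [|apply Hub; exists 0%nat; reflexivity].
  apply Rmin_glb; auto. apply Rabs_pos.
Qed.

Definition pr (a b : nat) : nat := Cantor.to_nat (a, b).
Definition fstp (n : nat) : nat := fst (Cantor.of_nat n).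
Definition sndp (n : nat) : nat := snd (Cantor.of_nat n).
Lemma fstp_pr a b : fstp (pr a b) = a.
Proof. unfold fstp, pr. rewrite Cantor.cancel_of_to. reflexivity. Qed.
Lemma sndp_pr a b : sndp (pr a b) = b.
Proof. unfold sndp, pr. rewrite Cantor.cancel_of_to. reflexivity. Qed.

Lemma pigeon (n : nat) (P : nat -> nat -> Prop) :
  (forall j, exists i, (i < n)%nat /\ P j i) ->
  exists i, (i < n)%nat /\ forall J, exists j, (J <= j)%nat /\ P j i.
Proof.
  revert P; induction n as [|n IH]; intros P H.
  - destruct (H 0%nat) as [i [Hi _]]. lia.
  - destruct (classic (forall J, exists j, (J <= j)%nat /\ P j n)) as [Hy|Hn].
    + exists n. split; auto.
    + apply not_all_ex_not in Hn. destruct Hn as [J0 HJ0].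
      destruct (IH (fun j i => P (j + J0)%nat i)) as [i [Hi Hi2]].
      { intros j. destruct (H (j + J0)%nat) as [i [Hi Pi]].
        exists i. split; auto. destruct (Nat.eq_dec i n) as [->|Hne]; [|lia].
        exfalso. apply HJ0. exists (j + J0)%nat. split; [lia|auto]. }
      exists i. split; [lia|]. intros J. destruct (Hi2 J) as [j [Hj Pj]].
      exists (j + J0)%nat. split; [lia|auto].
Qed.

Lemma fin_unif (n : nat) (Q : nat -> nat -> Prop) :
  (forall i J J', (J <= J')%nat -> Q i J -> Q i J') ->
  (forall i, (i < n)%nat -> exists J, Q i J) ->
  exists J, forall i, (i < n)%nat -> Q i J.
Proof.
  intros Hmono; induction n as [|n IH]; intros H.
  - exists 0%nat. intros; lia.
  - destruct IH as [J1 HJ1]. { intros i Hi. apply H. lia. }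
    destruct (H n) as [J2 HJ2]; [lia|].
    exists (max J1 J2). intros i Hi.
    destruct (Nat.eq_dec i n) as [->|Hne].
    + apply Hmono with J2; [lia|auto].
    + apply Hmono with J1; [lia|]. apply HJ1. lia.
Qed.

Definition sinc (f : nat -> nat) : Prop := forall n, (f n < f (S n))%nat.
Lemma sinc_lt f : sinc f -> forall a b, (a < b)%nat -> (f a < f b)%nat.
Proof.
  intros Hf a b Hab. induction Hab. apply Hf.
  specialize (Hf m). lia.
Qed.
Lemma sinc_le f : sinc f -> forall a b, (a <= b)%nat -> (f a <= f b)%nat.
Proof. intros Hf a b Hab. destruct (Nat.eq_dec a b) as [->|]; [lia|].
  apply Nat.lt_le_incl. apply sinc_lt; auto. lia. Qed.
Lemma sinc_ge f : sinc f -> forall n, (n <= f n)%nat.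
Proof. intros Hf n; induction n; [lia|]. specialize (Hf n). lia. Qed.

Lemma cv_sub (u : nat -> R) l (g : nat -> nat) :
  Un_cv u l -> (forall n, (n <= g n)%nat) -> Un_cv (fun n => u (g n)) l.
Proof.
  intros H Hg eps Heps. destruct (H eps Heps) as [N HN]. exists N.
  intros n Hn. apply HN. specialize (Hg n). lia.
Qed.

Fixpoint phi_of (g : nat -> nat -> nat) (k : nat) : nat :=
  match k with O => g O O | S k' => g (S (phi_of g k')) (S k') end.

Lemma bw_sub (u : nat -> R) (M : R) : (forall n, Rabs (u n) <= M) ->
  exists f, sinc f /\ exists l, Un_cv (fun n => u (f n)) l.
Proof.
  intros HM.
  destruct (Bolzano_Weierstrass u (fun c => -M <= c <= M) (compact_P3 (-M) M)) as [l Hl].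
  { intros n. specialize (HM n). unfold Rabs in HM. destruct Rcase_abs; lra. }
  assert (Hg : forall N k, exists p, (N <= p)%nat /\ Rabs (u p - l) < e_n k).
  { intros N k. destruct (Hl (disc l (mkposreal _ (e_pos k))) N) as [p [Hp Hd]].
    - exists (mkposreal _ (e_pos k)). intros y Hy. exact Hy.
    - exists p. split; auto. }
  assert (Hg' : forall N k, {p | (N <= p)%nat /\ Rabs (u p - l) < e_n k}).
  { intros N k. apply constructive_indefinite_description. apply Hg. }
  pose (g := fun N k => proj1_sig (Hg' N k)).
  exists (phi_of g). split.
  - assert (HgN : forall N k, (N <= g N k)%nat /\ Rabs (u (g N k) - l) < e_n k).
    { intros N k. exact (proj2_sig (Hg' N k)). }
    intros n. simpl. pose proof (proj1 (HgN (S (phi_of g n)) (S n))). lia.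
  - exists l. intros eps Heps. destruct (e_small eps Heps) as [N HN].
    exists N. intros n Hn. unfold R_dist.
    assert (Hb : Rabs (u (phi_of g n) - l) < e_n n).
    { destruct n; simpl; apply (proj2_sig (Hg' _ _)). }
    pose proof (e_dec N n Hn). lra.
Qed.

Fixpoint Phi (bwf : (nat -> R) -> nat -> nat) (v : nat -> nat -> R) (n : nat) : nat -> nat :=
  match n with
  | O => bwf (fun j => v j O)
  | S n' => fun j => Phi bwf v n' (bwf (fun j' => v (Phi bwf v n' j') (S n')) j)
  end.

Lemma diagonal (v : nat -> nat -> R) (M : R) : (forall j n, Rabs (v j n) <= M) ->
  exists sg : nat -> nat, sinc sg /\ exists lim : nat -> R,
    forall n, Un_cv (fun j => v (sg j) n) (lim n).
Proof.
  intros HM.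
  assert (Hb : forall u : nat -> R, exists f, (forall n, Rabs (u n) <= M) ->
              sinc f /\ exists l, Un_cv (fun n => u (f n)) l).
  { intros u. destruct (classic (forall n, Rabs (u n) <= M)) as [H|H].
    - destruct (bw_sub u M H) as [f Hf]. exists f. auto.
    - exists (fun n => n). intros H'. contradiction. }
  assert (Hb' : forall u : nat -> R, {f | (forall n, Rabs (u n) <= M) ->
              sinc f /\ exists l, Un_cv (fun n => u (f n)) l}).
  { intros u. apply constructive_indefinite_description. apply Hb. }
  pose (bwf := fun u => proj1_sig (Hb' u)).
  assert (Hbwf : forall u, (forall n, Rabs (u n) <= M) ->
              sinc (bwf u) /\ exists l, Un_cv (fun n => u (bwf u n)) l).
  { intros u. exact (proj2_sig (Hb' u)). }
  assert (Hs : forall n, sinc (Phi bwf v n)).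
  { induction n; simpl.
    - apply Hbwf. intros; apply HM.
    - intros j. apply sinc_lt; auto. apply Hbwf. intros; apply HM. }
  assert (Hsub : forall n m j, (n <= m)%nat -> exists q, (j <= q)%nat /\ Phi bwf v m j = Phi bwf v n q).
  { intros n m. induction m; intros j Hnm.
    - assert (n = 0%nat) by lia. subst. exists j. split; auto.
    - destruct (Nat.eq_dec n (S m)) as [->|Hne].
      + exists j. split; auto.
      + destruct (IHm (bwf (fun j' => v (Phi bwf v m j') (S m)) j)) as [q [Hq Heq]]; [lia|].
        exists q. split; [|simpl; auto].
        pose proof (sinc_ge _ (proj1 (Hbwf (fun j' => v (Phi bwf v m j') (S m)) (fun n => HM _ _))) j).
        lia. }
  assert (Hcv : forall n, exists l, Un_cv (fun j => v (Phi bwf v n j) n) l).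
  { intros [|n]; simpl.
    - apply (Hbwf (fun j => v j 0%nat)). intros; apply HM.
    - apply (Hbwf (fun j' => v (Phi bwf v n j') (S n))). intros; apply HM. }
  assert (Hcv' : forall n, {l | Un_cv (fun j => v (Phi bwf v n j) n) l}).
  { intros n. apply constructive_indefinite_description. apply Hcv. }
  exists (fun j => Phi bwf v j j). split.
  - intros j. simpl.
    apply sinc_lt; auto.
    pose proof (sinc_ge _ (proj1 (Hbwf (fun j' => v (Phi bwf v j j') (S j)) (fun n => HM _ _))) (S j)).
    lia.
  - exists (fun n => proj1_sig (Hcv' n)). intros n eps Heps.
    destruct (Hcv' n) as [l Hl]; simpl.
    destruct (Hl eps Heps) as [N HN]. exists (max n N). intros j Hj.
    destruct (Hsub n j j) as [q [Hq Heq]]; [lia|].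
    rewrite Heq. apply HN. lia.
Qed.

Lemma uncountable_prod (B : Type) : B -> uncountable_type ((nat -> bool) * B).
Proof.
  intros b0 [f Hf].
  pose (g := fun s : nat -> bool => f (s, b0)).
  assert (Hg : forall s t, g s = g t -> s = t).
  { intros s t H. apply Hf in H. inversion H. auto. }
  pose (inh := inhabits (fun _ : nat => false)).
  pose (sn := fun n => epsilon inh (fun s => g s = n)).
  pose (diag := fun n => negb (sn n n)).
  assert (Hd : g (sn (g diag)) = g diag).
  { unfold sn. apply (epsilon_spec inh (fun s => g s = g diag)). exists diag; auto. }
  apply Hg in Hd.
  assert (H2 : diag (g diag) = negb (sn (g diag) (g diag))) by reflexivity.
  rewrite Hd in H2. destruct (diag (g diag)); discriminate.
Qed.


Record Setting := mkS {
  Y : nat -> Type;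
  dY : forall j, Y j -> Y j -> R;
  tY : forall j, Y j -> R;
  Dd : R; Tm : R;
  HD : 0 < Dd; HT : 0 < Tm;
  Hmet : forall j, is_metric (dY j);
  Hlip : forall j x y, Rabs (tY j x - tY j y) <= dY j x y;
  Hdiam : forall j x y, dY j x y <= Dd;
  Htau : forall j x, 0 <= tY j x <= Tm;
  rr : nat -> R;
  Hr_pos : forall m, 0 < rr m;
  Hr_dec : forall m m', (m <= m')%nat -> rr m' <= rr m;
  Hr_lim : forall eps, 0 < eps -> exists m, rr m < eps;
  Nn : nat -> nat;
  pp : forall j, nat -> nat -> Y j;
  Hnet : forall j m x, exists i, (i < Nn m)%nat /\ dY j (pp j m i) x < rr m;
  dl : nat -> nat -> R; tl : nat -> R;
  Hdl : forall a b, Un_cv (fun j => dY j (pp j (fstp a) (sndp a)) (pp j (fstp b) (sndp b))) (dl a b);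
  Htl : forall a, Un_cv (fun j => tY j (pp j (fstp a) (sndp a))) (tl a);
  Hacc_d : forall j i i', (i < Nn j)%nat -> (i' < Nn j)%nat ->
     Rabs (dY j (pp j j i) (pp j j i') - dl (pr j i) (pr j i')) <= rr j;
  Hacc_t : forall j i, (i < Nn j)%nat -> Rabs (tY j (pp j j i) - tl (pr j i)) <= rr j }.


Lemma cv_const c : Un_cv (fun _ : nat => c) c.
Proof. intros eps H. exists 0%nat. intros. unfold R_dist. rewrite Rminus_diag, Rabs_R0. auto. Qed.

Lemma cv_cofinal_le (u : nat -> R) l c : Un_cv u l ->
  (forall J, exists j, (J <= j)%nat /\ u j < c) -> l <= c.
Proof.
  intros Hu H. apply Rnot_lt_le. intro Hlt.
  destruct (Hu (l - c)) as [N HN]; [lra|].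
  destruct (H N) as [j [Hj Hc]]. specialize (HN j Hj). unfold R_dist in HN.
  unfold Rabs in HN. destruct Rcase_abs; lra.
Qed.

Lemma closure_coord U i lo hi w : (forall u, U u -> lo <= u i <= hi) -> closure U w -> lo <= w i <= hi.
Proof.
  intros H Hw. split.
  - apply Rle_plus_epsilon. intros eps Heps. destruct (Hw eps Heps) as [u [Uu Hwu]].
    specialize (Hwu i). specialize (H u Uu). unfold Rabs in Hwu; destruct Rcase_abs; lra.
  - apply Rle_plus_epsilon. intros eps Heps. destruct (Hw eps Heps) as [u [Uu Hwu]].
    specialize (Hwu i). specialize (H u Uu). unfold Rabs in Hwu; destruct Rcase_abs; lra.
Qed.

Lemma eq_of_small x y : (forall eps, 0 < eps -> Rabs (x - y) <= eps) -> x = y.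
Proof.
  intros H. destruct (Req_dec x y) as [|Hne]; auto.
  exfalso. assert (0 < Rabs (x - y)) by (apply Rabs_pos_lt; lra).
  specialize (H (Rabs (x - y) / 2) ltac:(lra)). lra.
Qed.

Lemma rabs_tri3 a b c : Rabs (a - c) <= Rabs (a - b) + Rabs (b - c).
Proof. replace (a - c) with ((a - b) + (b - c)) by ring. apply Rabs_triang. Qed.

Lemma dY_nonneg st j x y : 0 <= dY st j x y.
Proof. destruct (Hmet st j) as [H _]. apply H. Qed.
Lemma dY_refl st j x : dY st j x x = 0.
Proof. destruct (Hmet st j) as [_ [H _]]. apply H. auto. Qed.
Lemma dY_sym st j x y : dY st j x y = dY st j y x.
Proof. destruct (Hmet st j) as [_ [_ [H _]]]. apply H. Qed.
Lemma dY_tri st j x y z : dY st j x z <= dY st j x y + dY st j y z.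
Proof. destruct (Hmet st j) as [_ [_ [_ H]]]. apply H. Qed.
Lemma dY_4 st j a b x y : Rabs (dY st j a x - dY st j b y) <= dY st j a b + dY st j x y.
Proof.
  pose proof (dY_tri st j a b x). pose proof (dY_tri st j b a y).
  pose proof (dY_tri st j a x y). pose proof (dY_tri st j b y x).
  rewrite (dY_sym st j b a) in *. rewrite (dY_sym st j y x) in *.
  apply Rabs_le. split; lra.
Qed.

Definition Ns0 st j k : Y st j := pp st j (fstp k) (sndp k).

Lemma Ns0_pr st j m i : Ns0 st j (pr m i) = pp st j m i.
Proof. unfold Ns0. rewrite fstp_pr, sndp_pr. reflexivity. Qed.

Lemma cv_ge_c (u : nat -> R) l c : Un_cv u l -> (forall n, c <= u n) -> c <= l.
Proof. intros Hu H. apply (@Rle_cv_lim (fun _ => c) u c l); auto. apply cv_const. Qed.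
Lemma cv_le_c (u : nat -> R) l c : Un_cv u l -> (forall n, u n <= c) -> l <= c.
Proof. intros Hu H. apply (@Rle_cv_lim u (fun _ => c) l c); auto. apply cv_const. Qed.
Lemma dl_nonneg st a b : 0 <= dl st a b.
Proof. apply (cv_ge_c _ _ _ (Hdl st a b)). intros; apply dY_nonneg. Qed.
Lemma dl_le st a b : dl st a b <= Dd st.
Proof. apply (cv_le_c _ _ _ (Hdl st a b)). intros; apply Hdiam. Qed.
Lemma cv_ext (u v : nat -> R) l : (forall n, u n = v n) -> Un_cv u l -> Un_cv v l.
Proof. intros H Hu eps He. destruct (Hu eps He) as [N HN]. exists N. intros n Hn. rewrite <- H. auto. Qed.

Lemma dl_refl st a : dl st a a = 0.
Proof.
  apply (UL_sequence (fun j => dY st j (pp st j (fstp a) (sndp a)) (pp st j (fstp a) (sndp a)))).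
  apply Hdl. apply (cv_ext (fun _ => 0)); [intros; rewrite dY_refl; auto|apply cv_const].
Qed.
Lemma dl_sym st a b : dl st a b = dl st b a.
Proof.
  apply (UL_sequence (fun j => dY st j (pp st j (fstp a) (sndp a)) (pp st j (fstp b) (sndp b)))).
  apply Hdl. eapply cv_ext; [|apply Hdl]. intros; simpl; apply dY_sym.
Qed.
Lemma dl_tri st a b c : dl st a c <= dl st a b + dl st b c.
Proof.
  eapply Rle_cv_lim; [|apply Hdl|apply CV_plus; apply Hdl]. intros; simpl; apply dY_tri.
Qed.
Lemma tl_bd st a : 0 <= tl st a <= Tm st.
Proof.
  split.
  - apply (cv_ge_c _ _ _ (Htl st a)). intros; apply Htau.
  - apply (cv_le_c _ _ _ (Htl st a)). intros; apply Htau.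
Qed.
Lemma tl_lip st a b : Rabs (tl st a - tl st b) <= dl st a b.
Proof.
  eapply Rle_cv_lim; [|apply cv_cvabs; apply CV_minus; apply Htl|apply Hdl].
  intros; simpl; apply Hlip.
Qed.
Lemma dl_4 st a b x y : Rabs (dl st a x - dl st b y) <= dl st a b + dl st x y.
Proof.
  pose proof (dl_tri st a b x). pose proof (dl_tri st b a y).
  pose proof (dl_tri st a x y). pose proof (dl_tri st b y x).
  rewrite (dl_sym st b a) in *. rewrite (dl_sym st y x) in *.
  apply Rabs_le. split; lra.
Qed.

Lemma dl_net st a m : exists i, (i < Nn st m)%nat /\ dl st a (pr m i) <= rr st m.
Proof.
  destruct (pigeon (Nn st m) (fun j i => dY st j (pp st j m i) (Ns0 st j a) < rr st m)) as [i [Hi Hc]].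
  { intros j. apply Hnet. }
  exists i. split; auto. rewrite dl_sym.
  apply (cv_cofinal_le _ _ _ (Hdl st (pr m i) a)).
  intros J. destruct (Hc J) as [j [Hj Hlt]]. exists j. split; auto.
  rewrite fstp_pr, sndp_pr. exact Hlt.
Qed.

Definition E st a : seqR := fun i => match i with O => tl st a | S k => dl st (fstp k) a end.
Definition Bd st : R := Dd st + Tm st.
Definition dsup st (w w' : seqR) : R := supn (Bd st) (fun i => w i - w' i).
Definition Eset st (u : seqR) : Prop := exists a, u = E st a.
Definition Xs st (w : seqR) : Prop := closure (Eset st) w.

Lemma Xs_E st a : Xs st (E st a).
Proof. apply closure_incl. exists a; auto. Qed.

Lemma Xs_coord0 st w : Xs st w -> 0 <= w O <= Tm st.
Proof. apply closure_coord. intros u [a ->]. simpl. apply tl_bd. Qed.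
Lemma Xs_coordS st w k : Xs st w -> 0 <= w (S k) <= Dd st.
Proof. apply closure_coord. intros u [a ->]. simpl. split; [apply dl_nonneg|apply dl_le]. Qed.

Lemma Xs_good st w w' i : Xs st w -> Xs st w' -> Rabs (w i - w' i) <= Bd st.
Proof.
  intros H H'. unfold Bd. pose proof (HD st); pose proof (HT st).
  destruct i as [|k].
  - pose proof (Xs_coord0 st w H); pose proof (Xs_coord0 st w' H').
    apply Rabs_le; split; lra.
  - pose proof (Xs_coordS st w k H); pose proof (Xs_coordS st w' k H').
    apply Rabs_le; split; lra.
Qed.

Lemma dsup_ge st w w' i : Xs st w -> Xs st w' -> Rabs (w i - w' i) <= dsup st w w'.
Proof. intros H H'. apply (supn_ge _ (fun i => w i - w' i)). apply Xs_good; auto. Qed.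
Lemma dsup_le st w w' c : linf_le w w' c -> dsup st w w' <= c.
Proof. intros H. apply supn_le. exact H. Qed.
Lemma dsup_linf st w w' : Xs st w -> Xs st w' -> linf_le w w' (dsup st w w').
Proof. intros H H' i. apply dsup_ge; auto. Qed.
Lemma dsup_nonneg st w w' : 0 <= dsup st w w'.
Proof. apply supn_nonneg. unfold Bd. pose proof (HD st); pose proof (HT st). lra. Qed.
Lemma dsup_sym st w w' : Xs st w -> Xs st w' -> dsup st w w' = dsup st w' w.
Proof.
  intros H H'. apply Rle_antisym; apply dsup_le; apply linf_le_sym; apply dsup_linf; auto.
Qed.
Lemma dsup_tri st w w' w'' : Xs st w -> Xs st w' -> Xs st w'' ->
  dsup st w w'' <= dsup st w w' + dsup st w' w''.
Proof.
  intros H H' H''. apply dsup_le. apply linf_le_tri with w'; apply dsup_linf; auto.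
Qed.
Lemma dsup_4 st a b a' b' : Xs st a -> Xs st b -> Xs st a' -> Xs st b' ->
  Rabs (dsup st a b - dsup st a' b') <= dsup st a a' + dsup st b b'.
Proof.
  intros Ha Hb Ha' Hb'.
  pose proof (dsup_tri st a a' b Ha Ha' Hb). pose proof (dsup_tri st a' b' b Ha' Hb' Hb).
  pose proof (dsup_tri st a' a b' Ha' Ha Hb'). pose proof (dsup_tri st a b b' Ha Hb Hb').
  rewrite (dsup_sym st a' a) in * by auto. rewrite (dsup_sym st b' b) in * by auto.
  apply Rabs_le; split; lra.
Qed.

Lemma dsup_E st a b : dsup st (E st a) (E st b) = dl st a b.
Proof.
  apply Rle_antisym.
  - apply dsup_le. intros [|k]; simpl.
    + apply tl_lip.
    + pose proof (dl_4 st (fstp k) (fstp k) a b). rewrite dl_refl in H. lra.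
  - pose proof (dsup_ge st (E st a) (E st b) (S (pr a 0)) (Xs_E st a) (Xs_E st b)) as H.
    simpl in H. rewrite fstp_pr, dl_refl in H.
    replace (0 - dl st a b) with (- dl st a b) in H by ring.
    rewrite Rabs_Ropp, Rabs_right in H; [auto|]. apply Rle_ge, dl_nonneg.
Qed.

Lemma kappa_id st w k : Xs st w -> w (S k) = dsup st (E st (fstp k)) w.
Proof.
  intros Hw. apply eq_of_small. intros eps Heps.
  destruct (Hw (eps/2)) as [u [[b ->] Hwb]]; [lra|].
  assert (H1 : Rabs (w (S k) - E st b (S k)) <= eps/2) by apply Hwb.
  simpl in H1. rewrite <- dsup_E in H1.
  pose proof (dsup_4 st (E st (fstp k)) (E st b) (E st (fstp k)) w
               (Xs_E st _) (Xs_E st _) (Xs_E st _) Hw) as H2.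
  assert (dsup st (E st (fstp k)) (E st (fstp k)) = 0).
  { rewrite dsup_E. apply dl_refl. }
  assert (dsup st (E st b) w <= eps/2).
  { apply dsup_le. apply linf_le_sym. exact Hwb. }
  pose proof (rabs_tri3 (w (S k)) (dsup st (E st (fstp k)) (E st b)) (dsup st (E st (fstp k)) w)).
  lra.
Qed.

Lemma Xs_net st w m : Xs st w -> exists i, (i < Nn st m)%nat /\ linf_le w (E st (pr m i)) (2 * rr st m).
Proof.
  intros Hw. destruct (Hw (rr st m) (Hr_pos st m)) as [u [[a ->] Hwa]].
  destruct (dl_net st a m) as [i [Hi Hd]].
  exists i. split; auto.
  replace (2 * rr st m) with (rr st m + rr st m) by ring.
  eapply linf_le_tri; [apply Hwa|].
  eapply linf_le_mono; [apply dsup_linf; apply Xs_E|]. rewrite dsup_E. exact Hd.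
Qed.


Definition iota st j a : nat := proj1_sig (constructive_indefinite_description _ (dl_net st a j)).
Lemma iota_spec st j a : (iota st j a < Nn st j)%nat /\ dl st a (pr j (iota st j a)) <= rr st j.
Proof. unfold iota. exact (proj2_sig (constructive_indefinite_description _ (dl_net st a j))). Qed.

Definition cc st j a : Y st j := pp st j j (iota st j a).
Definition Ns st j k : Y st j :=
  if Rle_dec (dY st j (Ns0 st j (sndp k)) (cc st j (fstp k))) (3 * rr st j)
  then Ns0 st j (sndp k) else cc st j (fstp k).

Lemma Ns_close st j k : dY st j (Ns st j k) (cc st j (fstp k)) <= 3 * rr st j.
Proof.
  unfold Ns. destruct Rle_dec as [H|H]; auto.
  rewrite dY_refl. pose proof (Hr_pos st j). lra.
Qed.

Lemma rabs_inv x c : Rabs x <= c -> -c <= x <= c.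
Proof. unfold Rabs. destruct Rcase_abs; intros; lra. Qed.

Lemma Ns0_dense st j : dense_seq (dY st j) (Ns0 st j).
Proof.
  intros x eps Heps. destruct (Hr_lim st eps Heps) as [m Hm].
  destruct (Hnet st j m x) as [i [Hi Hd]]. exists (pr m i). rewrite Ns0_pr. lra.
Qed.

Lemma Ns0_near st j q : exists a, dY st j (Ns0 st j q) (cc st j a) <= 3 * rr st j.
Proof.
  destruct (Hnet st j j (Ns0 st j q)) as [i [Hi Hd]].
  exists (pr j i). unfold cc.
  destruct (iota_spec st j (pr j i)) as [Hi' Hdl'].
  pose proof (Hacc_d st j i (iota st j (pr j i)) Hi Hi') as Ha. apply rabs_inv in Ha.
  pose proof (dY_tri st j (Ns0 st j q) (pp st j j i) (pp st j j (iota st j (pr j i)))).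
  rewrite (dY_sym st j (Ns0 st j q) (pp st j j i)) in H. lra.
Qed.

Lemma Ns_dense st j : dense_seq (dY st j) (Ns st j).
Proof.
  intros x eps Heps. destruct (Ns0_dense st j x eps Heps) as [q Hq].
  destruct (Ns0_near st j q) as [a Ha].
  exists (pr a q). unfold Ns. rewrite fstp_pr, sndp_pr.
  destruct Rle_dec as [H|H]; [auto|contradiction].
Qed.

Definition Corr st j (x : Y st j) (w : seqR) : Prop :=
  exists i, (i < Nn st j)%nat /\ dY st j (pp st j j i) x < rr st j /\ linf_le w (E st (pr j i)) (2 * rr st j).

Definition kap st j (x : Y st j) : seqR := kappa (tY st j) (dY st j) (Ns st j) x.

Lemma Corr_left st j x : exists w, Xs st w /\ Corr st j x w.
Proof.
  destruct (Hnet st j j x) as [i [Hi Hd]].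
  exists (E st (pr j i)). split; [apply Xs_E|].
  exists i. repeat split; auto. apply linf_le_refl. pose proof (Hr_pos st j); lra.
Qed.

Lemma Corr_right st j w : Xs st w -> exists x, Corr st j x w.
Proof.
  intros Hw. destruct (Xs_net st w j Hw) as [i [Hi Hwi]].
  exists (pp st j j i). exists i. repeat split; auto. rewrite dY_refl. apply Hr_pos.
Qed.

Lemma Corr_kappa st j x w : Xs st w -> Corr st j x w -> linf_le (kap st j x) w (8 * rr st j).
Proof.
  intros Hw [i [Hi [Hd Hwi]]].
  pose proof (Hr_pos st j) as Hr.
  intros [|k]; unfold kap; simpl.
  - pose proof (Hlip st j x (pp st j j i)) as H1. rewrite dY_sym in H1.
    pose proof (Hacc_t st j i Hi) as H2.
    specialize (Hwi O). simpl in Hwi.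
    pose proof (rabs_tri3 (tY st j x) (tY st j (pp st j j i)) (w O)).
    pose proof (rabs_tri3 (tY st j (pp st j j i)) (tl st (pr j i)) (w O)).
    rewrite (Rabs_minus_sym (tl st (pr j i))) in H0.
    lra.
  - set (a := fstp k). set (i' := iota st j a).
    destruct (iota_spec st j a) as [Hi' Hdi'].
    pose proof (Ns_close st j k) as H1.
    pose proof (dY_4 st j (Ns st j k) (cc st j a) x (pp st j j i)) as H2.
    rewrite (dY_sym st j x) in H2.
    pose proof (Hacc_d st j i' i Hi' Hi) as H3.
    rewrite <- dsup_E in H3.
    pose proof (dsup_4 st (E st (pr j i')) (E st (pr j i)) (E st a) w
                 (Xs_E st _) (Xs_E st _) (Xs_E st _) Hw) as H4.
    rewrite (dsup_E st (pr j i') a), (dl_sym st (pr j i') a) in H4.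
    assert (H5 : dsup st (E st (pr j i)) w <= 2 * rr st j).
    { apply dsup_le. apply linf_le_sym. exact Hwi. }
    rewrite (kappa_id st w k Hw). fold a.
    unfold cc in H2. fold i' in H2.
    pose proof (rabs_tri3 (dY st j (Ns st j k) x) (dY st j (pp st j j i') (pp st j j i))
                 (dsup st (E st a) w)) as T1.
    pose proof (rabs_tri3 (dY st j (pp st j j i') (pp st j j i)) (dsup st (E st (pr j i')) (E st (pr j i)))
                 (dsup st (E st a) w)) as T2.
    unfold cc in H1. unfold i', a in *. lra.
Qed.

Lemma Corr_dist st j x x' w w' : Xs st w -> Xs st w' -> Corr st j x w -> Corr st j x' w' ->
  Rabs (dY st j x x' - dsup st w w') <= 7 * rr st j.
Proof.
  intros Hw Hw' [i [Hi [Hd Hwi]]] [i' [Hi' [Hd' Hwi']]].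
  pose proof (dY_4 st j x (pp st j j i) x' (pp st j j i')) as H1.
  rewrite (dY_sym st j x (pp st j j i)), (dY_sym st j x' (pp st j j i')) in H1.
  pose proof (Hacc_d st j i i' Hi Hi') as H2. rewrite <- dsup_E in H2.
  pose proof (dsup_4 st (E st (pr j i)) (E st (pr j i')) w w' (Xs_E st _) (Xs_E st _) Hw Hw') as H3.
  assert (dsup st (E st (pr j i)) w <= 2 * rr st j).
  { apply dsup_le. apply linf_le_sym. exact Hwi. }
  assert (dsup st (E st (pr j i')) w' <= 2 * rr st j).
  { apply dsup_le. apply linf_le_sym. exact Hwi'. }
  pose proof (rabs_tri3 (dY st j x x') (dY st j (pp st j j i) (pp st j j i')) (dsup st w w')).
  pose proof (rabs_tri3 (dY st j (pp st j j i) (pp st j j i')) (dsup st (E st (pr j i)) (E st (pr j i'))) (dsup st w w')).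
  lra.
Qed.


Lemma transfer (P : seqR -> Prop) (dd : {w | P w} -> {w | P w} -> R) :
  (forall x y r, linf_lt (proj1_sig x) (proj1_sig y) r -> dd x y < r) ->
  ball_compact (fun s r t => linf_lt s t r) P ->
  ball_compact (metric_ball dd) (fun _ => True).
Proof.
  intros Hlt Hc I U Hopen Hcov.
  pose (U' := fun i y => exists x : {w | P w}, exists rho, 0 < rho /\
                (forall z, dd x z < rho -> U i z) /\ linf_lt (proj1_sig x) y (rho/2)).
  destruct (Hc I U') as [l Hl].
  - intros i y [x [rho [Hrho [Hball [dl0 [Hdl0 Hxy]]]]]].
    exists (rho/2 - dl0). split; [lra|].
    intros y' [dl1 [Hdl1 Hyy']].
    exists x, rho. split; auto. split; auto.
    exists (dl0 + dl1). split; [lra|]. intros k.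
    specialize (Hxy k); specialize (Hyy' k).
    pose proof (rabs_tri3 (proj1_sig x k) (y k) (y' k)). lra.
  - intros w Pw. destruct (Hcov (exist _ w Pw) Logic.I) as [i Ui].
    destruct (Hopen i _ Ui) as [rho [Hrho Hb]].
    exists i, (exist _ w Pw), rho. split; auto. split; [exact Hb|].
    exists 0. split; [lra|]. intros k. simpl. rewrite Rminus_diag, Rabs_R0; lra.
  - exists l. intros x _. destruct (Hl (proj1_sig x) (proj2_sig x)) as [i [Hi [x0 [rho [Hrho [Hb Hlt']]]]]].
    exists i. split; auto. apply Hb. apply Hlt in Hlt'. lra.
Qed.

Definition Xinf st := {w | Xs st w}.
Definition dinf st (x y : Xinf st) : R := dsup st (proj1_sig x) (proj1_sig y).
Definition tinf st (x : Xinf st) : R := proj1_sig x O.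
Definition Ninf st (k : nat) : Xinf st := exist _ (E st (fstp k)) (Xs_E st (fstp k)).

Lemma dinf_lt st x y r : linf_lt (proj1_sig x) (proj1_sig y) r -> dinf st x y < r.
Proof. intros [dl0 [H1 H2]]. unfold dinf. eapply Rle_lt_trans; [apply dsup_le; exact H2|auto]. Qed.

Lemma Eset_tb st : totbdd (Eset st).
Proof.
  intros eps Heps. destruct (Hr_lim st eps Heps) as [m Hm].
  exists (map (fun i => E st (pr m i)) (seq 0 (Nn st m))).
  intros u [a ->]. destruct (dl_net st a m) as [i [Hi Hd]].
  exists (E st (pr m i)). split.
  - apply (in_map (fun i => E st (pr m i))). apply in_seq. lia.
  - eapply linf_le_mono; [apply dsup_linf; apply Xs_E|]. rewrite dsup_E. lra.
Qed.

Lemma dinf_metric st : is_metric (dinf st).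
Proof.
  unfold dinf. split; [|split; [|split]].
  - intros; apply dsup_nonneg.
  - intros [x Hx] [y Hy]; simpl. split.
    + intros H. apply subset_eq_compat. apply functional_extensionality. intros i.
      pose proof (dsup_ge st x y i Hx Hy). rewrite H in H0.
      pose proof (Rabs_pos (x i - y i)).
      destruct (Req_dec (x i) (y i)) as [|Hne]; auto.
      assert (0 < Rabs (x i - y i)) by (apply Rabs_pos_lt; lra). lra.
    + intros H. inversion H. subst. apply Rle_antisym; [|apply dsup_nonneg].
      apply dsup_le. apply linf_le_refl. lra.
  - intros [x Hx] [y Hy]; simpl. apply dsup_sym; auto.
  - intros [x Hx] [y Hy] [z Hz]; simpl. apply dsup_tri; auto.
Qed.

Lemma Xinf_cpt st : compact_timed_metric_space (dinf st) (tinf st).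
Proof.
  split; [apply dinf_metric|]. split; [|split].
  - apply transfer. { intros x y r H. apply dinf_lt. exact H. }
    apply compact_of. apply closure_totbdd, Eset_tb. apply closure_complete.
  - intros [x Hx]. unfold tinf; simpl. apply (Xs_coord0 st x Hx).
  - intros [x Hx] [y Hy]. unfold tinf, dinf; simpl. apply dsup_ge; auto.
Qed.

Lemma kappa_inf st (x : Xinf st) : kappa (tinf st) (dinf st) (Ninf st) x = proj1_sig x.
Proof.
  apply functional_extensionality. intros [|k]; simpl; [reflexivity|].
  destruct x as [w Hw]; simpl. symmetry. apply kappa_id. auto.
Qed.

Definition tailf (w : seqR) : seqR := fun k => w (S k).
Definition UZ st (z : seqR) : Prop :=
  (exists j (x : Y st j), z = tailf (kap st j x)) \/ (exists a, z = tailf (E st a)).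
Definition Zs st := closure (UZ st).

Lemma kap_lip st j x y : linf_le (kap st j x) (kap st j y) (dY st j x y).
Proof.
  intros [|k]; unfold kap; simpl.
  - apply Hlip.
  - pose proof (dY_4 st j (Ns st j k) (Ns st j k) x y). rewrite dY_refl in H. lra.
Qed.

Lemma tail_le w w' c : linf_le w w' c -> linf_le (tailf w) (tailf w') c.
Proof. intros H k. apply H. Qed.

Lemma UZ_tb st : totbdd (UZ st).
Proof.
  intros eps Heps. destruct (Hr_lim st (eps/10)) as [m Hm]; [lra|].
  pose proof (Hr_pos st m) as Hrm.
  exists (map (fun i => tailf (E st (pr m i))) (seq 0 (Nn st m)) ++
          flat_map (fun j => map (fun i => tailf (kap st j (pp st j m i))) (seq 0 (Nn st m))) (seq 0 m)).
  intros u [[j [x ->]] | [a ->]].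
  - destruct (Compare_dec.lt_dec j m) as [Hjm|Hjm].
    + destruct (Hnet st j m x) as [i [Hi Hd]].
      exists (tailf (kap st j (pp st j m i))). split.
      * apply in_or_app; right. apply in_flat_map. exists j. split; [apply in_seq; lia|].
        apply (in_map (fun i => tailf (kap st j (pp st j m i)))). apply in_seq. lia.
      * apply tail_le. eapply linf_le_mono; [apply kap_lip|]. rewrite dY_sym. lra.
    + destruct (Corr_left st j x) as [w [Hw Hc]].
      pose proof (Corr_kappa st j x w Hw Hc) as Hk.
      destruct (Xs_net st w m Hw) as [i [Hi Hwi]].
      exists (tailf (E st (pr m i))). split.
      * apply in_or_app; left. apply (in_map (fun i => tailf (E st (pr m i)))). apply in_seq. lia.
      * apply tail_le. eapply linf_le_mono; [eapply linf_le_tri; [apply Hk|apply Hwi]|].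
        pose proof (Hr_dec st m j ltac:(lia)). lra.
  - destruct (Xs_net st (E st a) m (Xs_E st a)) as [i [Hi Hwi]].
    exists (tailf (E st (pr m i))). split.
    + apply in_or_app; left. apply (in_map (fun i => tailf (E st (pr m i)))). apply in_seq. lia.
    + apply tail_le. eapply linf_le_mono; [apply Hwi|]. lra.
Qed.

Lemma UZ_coord st u i : UZ st u -> 0 <= u i <= Dd st.
Proof.
  intros [[j [x ->]] | [a ->]]; unfold tailf, kap; simpl.
  - split; [apply dY_nonneg|apply Hdiam].
  - split; [apply dl_nonneg|apply dl_le].
Qed.

Lemma Zs_cpt st : linf_compact (Zs st).
Proof.
  split.
  - intros z Hz. exists (Dd st + 1). intros i.
    destruct (Hz 1) as [u [Hu Hzu]]; [lra|].
    pose proof (UZ_coord st u i Hu). specialize (Hzu i).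
    pose proof (rabs_tri3 (z i) (u i) 0). rewrite Rminus_0_r in H0. rewrite Rminus_0_r in H0.
    rewrite (Rabs_right (u i)) in H0 by lra. lra.
  - apply compact_of. apply closure_totbdd, UZ_tb. apply closure_complete.
Qed.


Lemma rr_ev st c eps : 0 < c -> 0 < eps -> exists N, forall j, (N <= j)%nat -> c * rr st j < eps.
Proof.
  intros Hc He. destruct (Hr_lim st (eps/c)) as [m Hm]; [apply Rdiv_lt_0_compat; auto|].
  exists m. intros j Hj. pose proof (Hr_dec st m j Hj).
  assert (c * rr st m < eps).
  { apply (Rmult_lt_compat_l c) in Hm; auto.
    replace (c * (eps / c)) with eps in Hm by (field; lra). exact Hm. }
  assert (c * rr st j <= c * rr st m) by (apply Rmult_le_compat_l; lra). lra.
Qed.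

Lemma haus st j eps : 16 * rr st j < eps ->
  hausdorff_lt (image (kap st j)) (image (kappa (tinf st) (dinf st) (Ninf st))) eps.
Proof.
  intros H. pose proof (Hr_pos st j).
  exists (16 * rr st j). split; [lra|]. split; [lra|]. split.
  - intros u [x <-]. destruct (Corr_left st j x) as [w [Hw Hc]].
    exists w. split.
    + exists (exist _ w Hw). rewrite kappa_inf. reflexivity.
    + apply linf_le_lt with (8 * rr st j); [apply Corr_kappa; auto|lra].
  - intros w [x <-]. rewrite kappa_inf. destruct x as [w Hw]; simpl.
    destruct (Corr_right st j w Hw) as [y Hy].
    exists (kap st j y). split; [exists y; reflexivity|].
    apply linf_le_lt with (8 * rr st j); [apply Corr_kappa; auto|lra].
Qed.

Lemma Ninf_dense st : dense_seq (dinf st) (Ninf st).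
Proof.
  intros [w Hw] eps Heps. destruct (Hw (eps/2)) as [u [[a ->] Hwa]]; [lra|].
  exists (pr a 0). unfold dinf, Ninf; simpl. rewrite fstp_pr.
  assert (dsup st (E st a) w <= eps/2) by (apply dsup_le; apply linf_le_sym; exact Hwa). lra.
Qed.

Lemma fam st w : Xs st w -> {f : forall j, Y st j | forall j, Corr st j (f j) w}.
Proof.
  intros Hw.
  exists (fun j => proj1_sig (constructive_indefinite_description _ (Corr_right st j w Hw))).
  intros j. exact (proj2_sig (constructive_indefinite_description _ (Corr_right st j w Hw))).
Qed.

Theorem core (st : Setting) :
  exists (Xinf : Type) (dinf : Xinf -> Xinf -> R) (tinf : Xinf -> R),
    inhabited Xinf /\ compact_timed_metric_space dinf tinf /\
    (forall eps, 0 < eps -> exists N, forall j, (N <= j)%nat ->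
       intrinsic_tH_lt (dY st j) (tY st j) dinf tinf eps) /\
    exists Z : seqR -> Prop, linf_compact Z /\
    exists (Ns : forall j, nat -> Y st j) (Ninf : nat -> Xinf),
      (forall j, dense_seq (dY st j) (Ns j)) /\ dense_seq dinf Ninf /\
      (forall j (x : Y st j), time_slab (Tm st) Z (kappa (tY st j) (dY st j) (Ns j) x)) /\
      (forall x : Xinf, time_slab (Tm st) Z (kappa tinf dinf Ninf x)) /\
      (forall eps, 0 < eps -> exists N, forall j, (N <= j)%nat ->
         hausdorff_lt (image (kappa (tY st j) (dY st j) (Ns j)))
                      (image (kappa tinf dinf Ninf)) eps) /\
      exists (A : Type) (I : forall j, A -> Y st j) (Iinf : A -> Xinf),
        uncountable_type A /\ (forall j, surj (I j)) /\ surj Iinf /\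
        (forall eps, 0 < eps -> exists N, forall j, (N <= j)%nat -> forall a : A,
           linf_le (kappa (tY st j) (dY st j) (Ns j) (I j a))
                   (kappa tinf dinf Ninf (Iinf a)) eps) /\
        (forall eps, 0 < eps -> exists N, forall j, (N <= j)%nat -> forall a : A,
           Rabs (tY st j (I j a) - tinf (Iinf a)) <= eps) /\
        (forall eps, 0 < eps -> exists N, forall j, (N <= j)%nat -> forall a a' : A,
           Rabs (dY st j (I j a) (I j a') - dinf (Iinf a) (Iinf a')) <= eps).
Proof.
  exists (Xinf st), (dinf st), (tinf st).
  split; [constructor; exact (Ninf st 0)|].
  split; [apply Xinf_cpt|].
  split.
  { intros eps Heps. destruct (rr_ev st 16 eps) as [N HN]; [lra|auto|].
    exists N. intros j Hj. exists (Ns st j), (Ninf st).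
    split; [apply Ns_dense|]. split; [apply Ninf_dense|]. apply haus. auto. }
  exists (Zs st). split; [apply Zs_cpt|].
  exists (Ns st), (Ninf st).
  split; [apply Ns_dense|]. split; [apply Ninf_dense|].
  split.
  { intros j x. split; [simpl; apply Htau|].
    apply closure_incl. left. exists j, x. reflexivity. }
  split.
  { intros x. rewrite kappa_inf. destruct x as [w Hw]; simpl. split; [apply (Xs_coord0 st w Hw)|].
    intros eps Heps. destruct (Hw eps Heps) as [u [[a ->] Hwa]].
    exists (tailf (E st a)). split; [right; exists a; auto|apply tail_le; auto]. }
  split.
  { intros eps Heps. destruct (rr_ev st 16 eps) as [N HN]; [lra|auto|].
    exists N. intros j Hj. apply haus. auto. }
  pose (A := ((nat -> bool) * {q : Xinf st * (forall j, Y st j) |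
                forall j, Corr st j (snd q j) (proj1_sig (fst q))})%type).
  exists A, (fun j a => snd (proj1_sig (snd a)) j), (fun a => fst (proj1_sig (snd a))).
  split.
  { apply uncountable_prod.
    destruct (fam st (E st 0) (Xs_E st 0)) as [f Hf].
    exact (exist _ (exist _ (E st 0) (Xs_E st 0), f) Hf). }
  split.
  { intros j0 y. destruct (Corr_left st j0 y) as [w [Hw Hc]].
    destruct (fam st w Hw) as [f Hf].
    pose (g := fun j => match Nat.eq_dec j0 j with left e => eq_rect j0 (Y st) y j e | right _ => f j end).
    assert (Hg : forall j, Corr st j (g j) w).
    { intros j. unfold g. destruct (Nat.eq_dec j0 j) as [e|ne]; [destruct e; simpl; exact Hc|apply Hf]. }
    exists ((fun _ => true), exist _ (exist _ w Hw, g) Hg). simpl. unfold g.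
    destruct (Nat.eq_dec j0 j0) as [e|ne]; [|contradiction].
    rewrite (UIP_refl_nat _ e). reflexivity. }
  split.
  { intros [w Hw]. destruct (fam st w Hw) as [f Hf].
    exists ((fun _ => true), exist _ (exist _ w Hw, f) Hf). reflexivity. }
  split.
  { intros eps Heps. destruct (rr_ev st 8 eps) as [N HN]; [lra|auto|].
    exists N. intros j Hj [b [[[w Hw] f] Hf]]. simpl. rewrite kappa_inf. simpl.
    eapply linf_le_mono; [apply Corr_kappa; [exact Hw|apply (Hf j)]|].
    specialize (HN j Hj). lra. }
  split.
  { intros eps Heps. destruct (rr_ev st 8 eps) as [N HN]; [lra|auto|].
    exists N. intros j Hj [b [[[w Hw] f] Hf]]. simpl. unfold tinf; simpl.
    pose proof (Corr_kappa st j (f j) w Hw (Hf j) O) as H. unfold kap in H; simpl in H.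
    specialize (HN j Hj). lra. }
  { intros eps Heps. destruct (rr_ev st 7 eps) as [N HN]; [lra|auto|].
    exists N. intros j Hj [b [[[w Hw] f] Hf]] [b' [[[w' Hw'] f'] Hf']]. simpl. unfold dinf; simpl.
    pose proof (Corr_dist st j (f j) (f' j) w w' Hw Hw' (Hf j) (Hf' j)).
    specialize (HN j Hj). lra. }
Qed.


Fixpoint Jp (Jm : nat -> nat) (m : nat) : nat :=
  match m with O => Jm O | S m' => Nat.max (S (Jp Jm m')) (Jm (S m')) end.
Lemma Jp_ge Jm m : (Jm m <= Jp Jm m)%nat.
Proof. destruct m; cbn [Jp]; lia. Qed.
Lemma Jp_sinc Jm : sinc (Jp Jm).
Proof. intros m. cbn [Jp]. lia. Qed.

Theorem theorem3p1
  (X : nat -> Type) (d : forall j, X j -> X j -> R) (tau : forall j, X j -> R)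
  (Hne : forall j, inhabited (X j))
  (Hcpt : forall j, compact_timed_metric_space (d j) (tau j))
  (D : R) (HD : 0 < D)
  (Hdiam : forall j (x y : X j), d j x y <= D)
  (Hequi : forall r, 0 < r <= D ->
     exists Nr : nat, forall j, exists p : nat -> X j,
       forall x : X j, exists i, (i < Nr)%nat /\ d j (p i) x < r)
  (tmax : R) (Htmax : 0 < tmax)
  (Htau : forall j (x : X j), 0 <= tau j x <= tmax) :
  exists sub : nat -> nat, (forall n, (sub n < sub (S n))%nat) /\
  exists (Xinf : Type) (dinf : Xinf -> Xinf -> R) (tinf : Xinf -> R),
    inhabited Xinf /\ compact_timed_metric_space dinf tinf /\
    (* intrinsic timed Hausdorff convergence *)
    (forall eps, 0 < eps -> exists N, forall j, (N <= j)%nat ->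
       intrinsic_tH_lt (d (sub j)) (tau (sub j)) dinf tinf eps) /\
    exists Z : seqR -> Prop, linf_compact Z /\
    exists (Ns : forall j, nat -> X (sub j)) (Ninf : nat -> Xinf),
      (forall j, dense_seq (d (sub j)) (Ns j)) /\ dense_seq dinf Ninf /\
      (forall j (x : X (sub j)), time_slab tmax Z (kappa (tau (sub j)) (d (sub j)) (Ns j) x)) /\
      (forall x : Xinf, time_slab tmax Z (kappa tinf dinf Ninf x)) /\
      (forall eps, 0 < eps -> exists N, forall j, (N <= j)%nat ->
         hausdorff_lt (image (kappa (tau (sub j)) (d (sub j)) (Ns j)))
                      (image (kappa tinf dinf Ninf)) eps) /\
      exists (A : Type) (I : forall j, A -> X (sub j)) (Iinf : A -> Xinf),
        uncountable_type A /\ (forall j, surj (I j)) /\ surj Iinf /\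
        (forall eps, 0 < eps -> exists N, forall j, (N <= j)%nat -> forall a : A,
           linf_le (kappa (tau (sub j)) (d (sub j)) (Ns j) (I j a))
                   (kappa tinf dinf Ninf (Iinf a)) eps) /\
        (forall eps, 0 < eps -> exists N, forall j, (N <= j)%nat -> forall a : A,
           Rabs (tau (sub j) (I j a) - tinf (Iinf a)) <= eps) /\
        (forall eps, 0 < eps -> exists N, forall j, (N <= j)%nat -> forall a a' : A,
           Rabs (d (sub j) (I j a) (I j a') - dinf (Iinf a) (Iinf a')) <= eps).
Proof.
  pose (r := fun m : nat => D / INR (S m)).
  assert (Hr_pos : forall m, 0 < r m).
  { intros m. unfold r. apply Rdiv_lt_0_compat; auto. apply lt_0_INR. lia. }
  assert (Hr_leD : forall m, r m <= D).
  { intros m. unfold r. pose proof (le_INR 1 (S m) ltac:(lia)). change (INR 1) with 1 in H.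
    unfold Rdiv. rewrite <- (Rmult_1_r D) at 2. apply Rmult_le_compat_l; [lra|].
    rewrite <- Rinv_1. apply Rinv_le_contravar; lra. }
  assert (Hr_dec : forall m m', (m <= m')%nat -> r m' <= r m).
  { intros m m' H. unfold r, Rdiv. apply Rmult_le_compat_l; [lra|].
    apply Rinv_le_contravar; [apply lt_0_INR; lia|apply le_INR; lia]. }
  assert (Hr_lim : forall eps, 0 < eps -> exists m, r m < eps).
  { intros eps Heps. destruct (archimed_cor1 (eps / D)) as [N [HN HN0]]; [apply Rdiv_lt_0_compat; auto|].
    exists N. unfold r.
    assert (/ INR (S N) <= / INR N) by (apply Rinv_le_contravar; [apply lt_0_INR; lia|apply le_INR; lia]).
    assert (D * / INR N < D * (eps / D)) by (apply Rmult_lt_compat_l; auto).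
    replace (D * (eps / D)) with eps in H0 by (field; lra).
    unfold Rdiv. assert (D * / INR (S N) <= D * / INR N) by (apply Rmult_le_compat_l; lra). lra. }
  assert (H1 : forall m, {Nr : nat | forall j, exists p : nat -> X j,
                 forall x : X j, exists i, (i < Nr)%nat /\ d j (p i) x < r m}).
  { intros m. apply constructive_indefinite_description. apply Hequi. split; auto. }
  pose (Nn := fun m => proj1_sig (H1 m)).
  assert (H2 : forall m j, {p : nat -> X j | forall x : X j, exists i, (i < Nn m)%nat /\ d j (p i) x < r m}).
  { intros m j. apply constructive_indefinite_description. exact (proj2_sig (H1 m) j). }
  pose (P0 := fun j m => proj1_sig (H2 m j)).
  assert (HP0 : forall j m x, exists i, (i < Nn m)%nat /\ d j (P0 j m i) x < r m).
  { intros j m. exact (proj2_sig (H2 m j)). }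
  pose (Ns0 := fun j k => P0 j (fstp k) (sndp k)).
  pose (v := fun j n => match sndp n with
                        | O => tau j (Ns0 j (fstp n))
                        | S b => d j (Ns0 j (fstp n)) (Ns0 j b) end).
  destruct (diagonal v (D + tmax)) as [sg [Hsg [lim Hlim]]].
  { intros j n. unfold v. destruct (sndp n) as [|b].
    - pose proof (Htau j (Ns0 j (fstp n))). rewrite Rabs_right; lra.
    - destruct (Hcpt j) as [[Hnn _] _]. pose proof (Hnn (Ns0 j (fstp n)) (Ns0 j b)).
      pose proof (Hdiam j (Ns0 j (fstp n)) (Ns0 j b)). rewrite Rabs_right; lra. }
  pose (dl := fun a b => lim (pr a (S b))).
  pose (tl := fun a => lim (pr a O)).
  assert (Hd_cv : forall a b, Un_cv (fun j => d (sg j) (Ns0 (sg j) a) (Ns0 (sg j) b)) (dl a b)).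
  { intros a b. eapply cv_ext; [|apply (Hlim (pr a (S b)))]. intros n. unfold v. simpl.
    rewrite sndp_pr, fstp_pr. reflexivity. }
  assert (Ht_cv : forall a, Un_cv (fun j => tau (sg j) (Ns0 (sg j) a)) (tl a)).
  { intros a. eapply cv_ext; [|apply (Hlim (pr a O))]. intros n. unfold v. simpl.
    rewrite sndp_pr, fstp_pr. reflexivity. }
  assert (Hacc : forall m, exists J, forall j, (J <= j)%nat ->
     (forall i i', (i < Nn m)%nat -> (i' < Nn m)%nat ->
        Rabs (d (sg j) (P0 (sg j) m i) (P0 (sg j) m i') - dl (pr m i) (pr m i')) <= r m) /\
     (forall i, (i < Nn m)%nat -> Rabs (tau (sg j) (P0 (sg j) m i) - tl (pr m i)) <= r m)).
  { intros m.
    destruct (fin_unif (Nn m) (fun i J => forall j, (J <= j)%nat -> forall i', (i' < Nn m)%nat ->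
        Rabs (d (sg j) (P0 (sg j) m i) (P0 (sg j) m i') - dl (pr m i) (pr m i')) <= r m)) as [J1 HJ1].
    { intros i J J' HJ H j Hj. apply H. lia. }
    { intros i Hi.
      destruct (fin_unif (Nn m) (fun i' J => forall j, (J <= j)%nat ->
        Rabs (d (sg j) (P0 (sg j) m i) (P0 (sg j) m i') - dl (pr m i) (pr m i')) <= r m)) as [J2 HJ2].
      { intros i' J J' HJ H j Hj. apply H. lia. }
      { intros i' Hi'. destruct (Hd_cv (pr m i) (pr m i') (r m) (Hr_pos m)) as [N HN].
        exists N. intros j Hj. specialize (HN j Hj). unfold R_dist, Ns0 in HN.
        rewrite !fstp_pr, !sndp_pr in HN. lra. }
      exists J2. intros j Hj i' Hi'. apply HJ2; auto. }
    destruct (fin_unif (Nn m) (fun i J => forall j, (J <= j)%nat ->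
        Rabs (tau (sg j) (P0 (sg j) m i) - tl (pr m i)) <= r m)) as [J3 HJ3].
    { intros i J J' HJ H j Hj. apply H. lia. }
    { intros i Hi. destruct (Ht_cv (pr m i) (r m) (Hr_pos m)) as [N HN].
      exists N. intros j Hj. specialize (HN j Hj). unfold R_dist, Ns0 in HN.
      rewrite !fstp_pr, !sndp_pr in HN. lra. }
    exists (Nat.max J1 J3). intros j Hj. split.
    - intros i i' Hi Hi'. apply HJ1; auto. lia.
    - intros i Hi. apply HJ3; auto. lia. }
  assert (Hacc' : forall m, {J | forall j, (J <= j)%nat ->
     (forall i i', (i < Nn m)%nat -> (i' < Nn m)%nat ->
        Rabs (d (sg j) (P0 (sg j) m i) (P0 (sg j) m i') - dl (pr m i) (pr m i')) <= r m) /\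
     (forall i, (i < Nn m)%nat -> Rabs (tau (sg j) (P0 (sg j) m i) - tl (pr m i)) <= r m)}).
  { intros m. apply constructive_indefinite_description. apply Hacc. }
  pose (Jm := fun m => proj1_sig (Hacc' m)).
  pose (sub := fun j => sg (Jp Jm j)).
  assert (Hsub : forall n, (sub n < sub (S n))%nat).
  { intros n. unfold sub. apply sinc_lt; auto. apply Jp_sinc. }
  assert (HJ : forall j, (j <= Jp Jm j)%nat) by (apply sinc_ge, Jp_sinc).
  assert (Hacc_j : forall j,
     (forall i i', (i < Nn j)%nat -> (i' < Nn j)%nat ->
        Rabs (d (sub j) (P0 (sub j) j i) (P0 (sub j) j i') - dl (pr j i) (pr j i')) <= r j) /\
     (forall i, (i < Nn j)%nat -> Rabs (tau (sub j) (P0 (sub j) j i) - tl (pr j i)) <= r j)).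
  { intros j. apply (proj2_sig (Hacc' j)). exact (Jp_ge Jm j). }
  pose (st := mkS (fun j => X (sub j)) (fun j => d (sub j)) (fun j => tau (sub j)) D tmax HD Htmax
     (fun j => proj1 (Hcpt (sub j)))
     (fun j => proj2 (proj2 (proj2 (Hcpt (sub j)))))
     (fun j => Hdiam (sub j)) (fun j => Htau (sub j))
     r Hr_pos Hr_dec Hr_lim Nn (fun j => P0 (sub j)) (fun j => HP0 (sub j))
     dl tl
     (fun a b => cv_sub _ _ (Jp Jm) (Hd_cv a b) HJ)
     (fun a => cv_sub _ _ (Jp Jm) (Ht_cv a) HJ)
     (fun j => proj1 (Hacc_j j)) (fun j => proj2 (Hacc_j j))).
  exists sub. split; [exact Hsub|].
  exact (core st).
Qed.
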